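(* Let $z,w>0$ be such that $\mathrm{DAG}(z,w)<\infty$, let $G=(V,E)$ be a random labelled DAG drawn from the Boltzmann model with parameters $(z,w)$, and condition on its root-layering being a given ordered partition $(V_1,\dots,V_k)$. Then, conditionally, the edge set $E$ has the following distribution: there are no edges from $V_j$ to $V_i$ for $i\le j$; for every pair $(x,y)$ with $x\in V_i$, $y\in V_j$ and $j\ge i+2$, the edge $(x,y)$ is present with probability $\frac{w}{1+w}$; for every $i\in\{1,\dots,k-1\}$ and every $y\in V_{i+1}$, the set of in-neighbours of $y$ in $V_i$ is distributed as a random subset of $V_i$ obtained by including each element independently with probability $\frac{w}{1+w}$, conditioned on being non-empty (equivalently, such subsets are redrawn until at least one edge is present); and all these random choices are mutually independent.
   Context: A labelled DAG with $n$ vertices is a directed acyclic graph on vertex set $\{1,\dots,n\}$; $v(G)$, $e(G)$ denote its numbers of vertices and edges; a source is a vertex of in-degree $0$. $\mathrm{DAG}(z,w)=\sum_G \frac{z^{v(G)}w^{e(G)}}{(1+w)^{\binom{v(G)}{2}}v(G)!}$ over all labelled DAGs. The Boltzmann model with parameters $(z,w)$ assigns probability $\frac{z^{v(G)}w^{e(G)}}{(1+w)^{\binom{v(G)}{2}}v(G)!\,\mathrm{DAG}(z,w)}$ to each labelled DAG $G$. The root-layering of a DAG $G=(V,E)$ is the ordered partition $(V_1,\dots,V_k)$ of $V$ where $V_i$ is the set of sources of the graph obtained from $G$ by deleting $V_1\cup\dots\cup V_{i-1}$. *)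

(* Defs.v *)
From HB Require Import structures.
From mathcomp Require Import all_boot all_order all_algebra.
From mathcomp Require Import all_classical all_reals all_analysis.
Set Implicit Arguments. Unset Strict Implicit. Unset Printing Implicit Defensive.
Import Order.TTheory GRing.Theory Num.Theory numFieldNormedType.Exports.
Local Open Scope ring_scope.

(* A labelled digraph on n vertices is identified with its set of directed
   edges E : {set 'I_n * 'I_n}; vertices are labelled 0..n-1 (instead of 1..n). *)

Definition edge_rel n (E : {set 'I_n * 'I_n}) : rel 'I_n := fun a b => (a, b) \in E.

Definition is_dag n (E : {set 'I_n * 'I_n}) : bool :=
  [forall x, forall y, ((x, y) \in E) ==> ~~ connect (edge_rel E) y x].

Definition sources_in n (E : {set 'I_n * 'I_n}) (Rm : {set 'I_n}) : {set 'I_n} :=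
  [set v in Rm | [forall u in Rm, (u, v) \notin E]].

Fixpoint layers_aux n (E : {set 'I_n * 'I_n}) (fuel : nat) (Rm : {set 'I_n})
  : seq {set 'I_n} :=
  match fuel with
  | 0 => [::]
  | fuel'.+1 =>
      if Rm == finset.set0 then [::]
      else sources_in E Rm :: layers_aux E fuel' (Rm :\: sources_in E Rm)
  end.

(* root-layering (V_1,...,V_k) of a DAG; n+1 rounds always suffice for a DAG *)
Definition root_layering n (E : {set 'I_n * 'I_n}) : seq {set 'I_n} :=
  layers_aux E n.+1 finset.setT.

Definition ordered_partition n (L : seq {set 'I_n}) : Prop :=
  [/\ all (fun V => V != finset.set0) L,
      (forall i j, (i < j < size L)%N -> [disjoint nth finset.set0 L i & nth finset.set0 L j])
    & \bigcup_(V <- L) V = finset.setT].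

Definition bweight (R : realType) (z w : R) n (E : {set 'I_n * 'I_n}) : R :=
  z ^+ n * w ^+ #|E| / ((1 + w) ^+ 'C(n, 2) * n`!%:R).

Definition dag_term (R : realType) (z w : R) (n : nat) : R :=
  \sum_(E : {set 'I_n * 'I_n} | is_dag E) bweight z w E.

Definition DAGzw (R : realType) (z w : R) : R := limn (series (dag_term z w)).

Definition bprob (R : realType) (z w : R) n (E : {set 'I_n * 'I_n}) : R :=
  if is_dag E then bweight z w E / DAGzw z w else 0.

Definition prob_layering (R : realType) (z w : R) n (L : seq {set 'I_n}) : R :=
  \sum_(E : {set 'I_n * 'I_n} | root_layering E == L) bprob z w E.

Definition cond_prob (R : realType) (z w : R) n (L : seq {set 'I_n})
  (E : {set 'I_n * 'I_n}) : R :=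
  (if root_layering E == L then bprob z w E else 0) / prob_layering z w L.

(* index (0-based) of the block of L containing x *)
Definition layer_of n (L : seq {set 'I_n}) (x : 'I_n) : nat :=
  find (fun V : {set 'I_n} => x \in V) L.

Definition cond_law (R : realType) (w : R) n (L : seq {set 'I_n})
  (E : {set 'I_n * 'I_n}) : R :=
  let p := w / (1 + w) in
  let lay := layer_of L in
  if [exists x, exists y, ((x, y) \in E) && (lay y <= lay x)%N] then 0 else
  (\prod_(x : 'I_n) \prod_(y : 'I_n | ((lay x).+2 <= lay y)%N)
      (if (x, y) \in E then p else 1 - p)) *
  (\prod_(y : 'I_n | (0 < lay y)%N)
     let Vi := nth finset.set0 L (lay y).-1 in
     let N := [set x in Vi | (x, y) \in E] in
     if N == finset.set0 then 0
     else p ^+ #|N| * (1 - p) ^+ (#|Vi| - #|N|) / (1 - (1 - p) ^+ #|Vi|)).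

(* Main.v *)
Require Import Defs.
From HB Require Import structures.
From mathcomp Require Import all_boot all_order all_algebra.
From mathcomp Require Import all_classical all_reals all_analysis.
From mathcomp Require Import zify ring lra.
Import Order.TTheory GRing.Theory Num.Theory numFieldNormedType.Exports.
Local Open Scope ring_scope.
Set Implicit Arguments. Unset Strict Implicit. Unset Printing Implicit Defensive.

Lemma lay_has n (L : seq {set 'I_n}) (HL : ordered_partition L) (x : 'I_n) :
  has (fun V : {set 'I_n} => x \in V) L.
Proof.
case: HL => _ _ HU.
have : x \in \bigcup_(V <- L) V by rewrite HU inE.
elim: L {HU} => [|V L IH]; first by rewrite big_nil inE.
by rewrite big_cons inE /= => /orP [->|/IH ->] //; rewrite orbT.
Qed.

Lemma lay_lt n (L : seq {set 'I_n}) (HL : ordered_partition L) x :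
  (layer_of L x < size L)%N.
Proof. by rewrite /layer_of -has_find; apply: lay_has. Qed.

Lemma lay_mem n (L : seq {set 'I_n}) (HL : ordered_partition L) x :
  x \in nth finset.set0 L (layer_of L x).
Proof. exact: (nth_find _ (lay_has HL x)). Qed.

Lemma mem_lay n (L : seq {set 'I_n}) (HL : ordered_partition L) x i :
  (i < size L)%N -> (x \in nth finset.set0 L i) = (layer_of L x == i).
Proof.
move=> Hi; apply/idP/eqP => [Hx|<-]; last exact: lay_mem.
case: (ltngtP (layer_of L x) i) => // H.
- case: (HL) => _ Hd _.
  have := Hd _ _ (introT andP (conj H Hi)).
  by move/disjointFr => /(_ x (lay_mem HL x)); rewrite Hx.
- have := before_find finset.set0 H.
  by rewrite Hx.
Qed.

Lemma size_L n (L : seq {set 'I_n}) (HL : ordered_partition L) : (size L <= n)%N.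
Proof.
suff H : {subset iota 0 (size L) <= map (layer_of L) (enum 'I_n)}.
  by have := uniq_leq_size (iota_uniq 0 (size L)) H; rewrite size_iota size_map size_enum_ord.
move=> i; rewrite mem_iota add0n /= => Hi.
case: (HL) => Hne _ _.
have : nth finset.set0 L i != finset.set0 by apply: (all_nthP _ Hne).
case/set0Pn => x Hx.
apply/mapP; exists x; first by rewrite mem_enum.
by apply/eqP; rewrite eq_sym -(mem_lay HL).
Qed.
Definition Rk n (L : seq {set 'I_n}) k : {set 'I_n} := [set x | (k <= layer_of L x)%N].

Definition validb n (L : seq {set 'I_n}) (E : {set 'I_n * 'I_n}) : bool :=
  [forall x, forall y, ((x, y) \in E) ==> (layer_of L x < layer_of L y)%N] &&
  [forall y, (0 < layer_of L y)%N ==>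
     [exists x, (layer_of L x == (layer_of L y).-1) && ((x, y) \in E)]].

Lemma R0 n (L : seq {set 'I_n}) : Rk L 0 = finset.setT.
Proof. by apply/setP => x; rewrite !inE. Qed.

Lemma R_empty n (L : seq {set 'I_n}) (HL : ordered_partition L) k :
  (Rk L k == finset.set0) = (size L <= k)%N.
Proof.
apply/idP/idP => [/eqP H|H].
- rewrite leqNgt; apply/negP => Hk.
  case: (HL) => Hne _ _.
  have : nth finset.set0 L k != finset.set0 by apply: (all_nthP _ Hne).
  case/set0Pn => x Hx.
  have : x \in Rk L k by rewrite inE -(eqP (_ : layer_of L x == k)) // -(mem_lay HL).
  by rewrite H inE.
- apply/eqP/setP => x; rewrite !inE; apply/negbTE; rewrite -ltnNge.
  exact: leq_trans (lay_lt HL x) H.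
Qed.

Lemma R_step n (L : seq {set 'I_n}) (HL : ordered_partition L) k :
  (k < size L)%N -> Rk L k :\: nth finset.set0 L k = Rk L k.+1.
Proof.
move=> Hk; apply/setP => x; rewrite !inE (mem_lay HL _ Hk).
by rewrite ltn_neqAle eq_sym.
Qed.

Lemma la_fwd n (L : seq {set 'I_n}) (HL : ordered_partition L) (E : {set 'I_n * 'I_n}) :
  (forall k, (k < size L)%N -> sources_in E (Rk L k) = nth finset.set0 L k) ->
  forall fuel k, layers_aux E fuel (Rk L k) = take fuel (drop k L).
Proof.
move=> HS; elim=> [|fuel IH] k /=; first by rewrite take0.
rewrite (R_empty HL).
case: leqP => Hk; first by rewrite drop_oversize.
by rewrite HS // (R_step HL Hk) IH (drop_nth finset.set0 Hk).
Qed.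

Lemma la_bwd n (L : seq {set 'I_n}) (HL : ordered_partition L) (E : {set 'I_n * 'I_n}) :
  forall fuel k, layers_aux E fuel (Rk L k) = drop k L ->
  forall j, (k <= j < size L)%N -> sources_in E (Rk L j) = nth finset.set0 L j.
Proof.
elim=> [|fuel IH] k /=.
- move=> /esym/(congr1 size); rewrite size_drop /= => /eqP; rewrite subn_eq0 => Hk j /andP [H1 H2].
  by move: (leq_trans Hk H1); rewrite leqNgt H2.
- rewrite (R_empty HL).
  case: leqP => Hk.
  + move=> _ j /andP [H1 H2].
    by move: (leq_trans Hk H1); rewrite leqNgt H2.
  + rewrite (drop_nth finset.set0 Hk) => [[H1 H2]] j /andP [Hkj Hj].
    case: (ltngtP k j) Hkj => // [Hlt _|<- _]; last by [].
    by apply: (IH k.+1) => //; [rewrite -(R_step HL Hk) -H1 | rewrite Hlt Hj].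
Qed.

Lemma valid_sources n (L : seq {set 'I_n}) (HL : ordered_partition L) (E : {set 'I_n * 'I_n}) :
  validb L E -> forall k, (k < size L)%N -> sources_in E (Rk L k) = nth finset.set0 L k.
Proof.
case/andP => /forallP H1 /forallP H2 k Hk.
apply/setP => v; rewrite (mem_lay HL _ Hk) !inE.
apply/andP/eqP => [[Hv /forallP Hs]|Hv].
- case: (ltngtP k (layer_of L v)) Hv => // Hlt _.
  have := H2 v; rewrite (leq_ltn_trans _ Hlt) //= => /existsP [u /andP [/eqP Hu Huv]].
  have := Hs u; rewrite inE Hu Huv /= implybF -ltnS prednK ?Hlt //.
  exact: leq_ltn_trans _ Hlt.
- split; first by rewrite Hv.
  apply/forallP => u; rewrite inE; apply/implyP => Hu; apply/negP => Huv.
  have := forallP (H1 u) v; rewrite Huv /= Hv => Hlt.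
  by move: (leq_ltn_trans Hu Hlt); rewrite ltnn.
Qed.

Lemma sources_valid1 n (L : seq {set 'I_n}) (HL : ordered_partition L) (E : {set 'I_n * 'I_n}) :
  (forall k, (k < size L)%N -> sources_in E (Rk L k) = nth finset.set0 L k) ->
  forall x y, (x, y) \in E -> (layer_of L x < layer_of L y)%N.
Proof.
move=> HS x y Hxy.
have Hy : y \in sources_in E (Rk L (layer_of L y)) by rewrite HS ?lay_lt ?lay_mem.
move: Hy; rewrite inE => /andP [_ /forallP /(_ x)].
rewrite inE Hxy implybF -ltnNge; exact.
Qed.

Lemma sources_valid n (L : seq {set 'I_n}) (HL : ordered_partition L) (E : {set 'I_n * 'I_n}) :
  (forall k, (k < size L)%N -> sources_in E (Rk L k) = nth finset.set0 L k) -> validb L E.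
Proof.
move=> HS; apply/andP; split.
- apply/forallP => x; apply/forallP => y; apply/implyP => Hxy.
  exact: (sources_valid1 HL HS).
- apply/forallP => y; apply/implyP => Hy.
  set k := (layer_of L y).-1.
  have Hk : (k < size L)%N by apply: leq_ltn_trans (leq_pred _) (lay_lt HL y).
  have Hyk : y \notin sources_in E (Rk L k).
    by rewrite HS // (mem_lay HL _ Hk) /k; apply/negP => /eqP; lia.
  move: Hyk; rewrite inE negb_and inE /k leq_pred /= negb_forall => /existsP [u].
  rewrite negb_imply negbK inE => /andP [Hu Huy].
  apply/existsP; exists u; rewrite Huy andbT eqn_leq Hu andbT.
  have := sources_valid1 HL HS Huy.
  lia.
Qed.

Lemma rl_valid n (L : seq {set 'I_n}) (HL : ordered_partition L) (E : {set 'I_n * 'I_n}) :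
  (root_layering E == L) = validb L E.
Proof.
apply/eqP/idP => [H|H].
- apply: (sources_valid HL) => k Hk.
  apply: (@la_bwd _ _ HL E n.+1 0); last by rewrite Hk.
  by rewrite drop0 -H /root_layering R0.
- rewrite /root_layering -(R0 L) (la_fwd HL (valid_sources HL H)) drop0 take_oversize //.
  exact: leq_trans (size_L HL) (leqnSn n).
Qed.

Lemma valid_dag n (L : seq {set 'I_n}) (E : {set 'I_n * 'I_n}) :
  validb L E -> is_dag E.
Proof.
case/andP => /forallP H1 _.
have Hp : forall a b, connect (edge_rel E) a b -> (layer_of L a <= layer_of L b)%N.
  move=> a b /connectP [p Hp ->]; elim: p a Hp => [|c p IH] a //= /andP [Hac Hp].
  apply: leq_trans (IH _ Hp); apply: ltnW.
  exact: (implyP (forallP (H1 a) c) Hac).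
apply/forallP => x; apply/forallP => y; apply/implyP => Hxy; apply/negP => /Hp.
by rewrite leqNgt (implyP (forallP (H1 x) y) Hxy).
Qed.
Definition pp (R : realType) (w : R) : R := w / (1 + w).
Definition qq (R : realType) (w : R) : R := 1 - pp w.

Definition Afac (R : realType) (w : R) n (L : seq {set 'I_n}) (x y : 'I_n) (b : bool) : R :=
  if (layer_of L y <= layer_of L x)%N then (if b then 0 else 1)
  else if ((layer_of L x).+2 <= layer_of L y)%N then (if b then pp w else qq w) else 1.

Definition Vy n (L : seq {set 'I_n}) (y : 'I_n) := nth finset.set0 L (layer_of L y).-1.

Definition gfac (R : realType) (w : R) n (L : seq {set 'I_n}) (y : 'I_n) (S : {set 'I_n}) : R :=
  if (0 < layer_of L y)%N then
    (\prod_(x in Vy L y) (if x \in S then pp w else qq w)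
     - \prod_(x in Vy L y) (if x \in S then 0 else qq w)) / (1 - qq w ^+ #|Vy L y|)
  else 1.

Definition hfac (R : realType) (w : R) n (L : seq {set 'I_n}) (y : 'I_n) (S : {set 'I_n}) : R :=
  (\prod_x Afac w L x y (x \in S)) * gfac w L y S.

Definition col n (E : {set 'I_n * 'I_n}) (y : 'I_n) : {set 'I_n} := [set x | (x, y) \in E].

Definition Ff (R : realType) (w : R) n (L : seq {set 'I_n}) (E : {set 'I_n * 'I_n}) : R :=
  \prod_y hfac w L y (col E y).

Lemma prodA (R : realType) n (V N : {set 'I_n}) (a b : R) : N \subset V ->
  \prod_(x in V) (if x \in N then a else b) = a ^+ #|N| * b ^+ (#|V| - #|N|)%N.
Proof.
move=> HNV; rewrite (bigID (fun x => x \in N)) /=.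
rewrite (eq_bigr (fun=> a)); last by move=> x /andP [_ ->].
rewrite [X in _ * X](eq_bigr (fun=> b)); last by move=> x /andP [_ /negbTE ->].
rewrite (eq_bigl (fun x => x \in N)); last first.
  by move=> x; apply/andP/idP => [[]//|Hx]; split => //; apply: (fintype.subsetP HNV).
rewrite [X in _ * X](eq_bigl (fun x => x \in V :\: N)); last by move=> x; rewrite !inE andbC.
by rewrite !prodr_const cardsD (finset.setIidPr HNV).
Qed.

Lemma prodB (R : realType) n (V N : {set 'I_n}) (b : R) : N \subset V ->
  \prod_(x in V) (if x \in N then 0 else b) = if N == finset.set0 then b ^+ #|V| else 0.
Proof.
move=> HNV; case: ifP => [/eqP ->|/set0Pn [x Hx]].
- by rewrite (eq_bigr (fun=> b)) ?prodr_const // => x _; rewrite inE.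
- by rewrite (bigD1 x) /= ?Hx ?mul0r //; apply: (fintype.subsetP HNV).
Qed.

Lemma law_F (R : realType) (w : R) n (L : seq {set 'I_n}) (E : {set 'I_n * 'I_n}) :
  cond_law w L E = Ff w L E.
Proof.
rewrite /cond_law /Ff /=.
case: ifP => [/existsP [x /existsP [y /andP [Hxy Hle]]] | Hno].
  by rewrite (bigD1 y) //= /hfac (bigD1 x) //= {1}/Afac Hle inE Hxy /= !mul0r.
have Hno' : forall x y, (x, y) \in E -> (layer_of L x < layer_of L y)%N.
  move=> x y Hxy; rewrite ltnNge; apply/negP => Hle.
  by move/negbT/negP: Hno; apply; apply/existsP; exists x; apply/existsP; exists y; rewrite Hxy.
rewrite /hfac big_split /=; congr (_ * _).
- rewrite [RHS]exchange_big /=; apply: eq_bigr => x _.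
  rewrite [LHS]big_mkcond; apply: eq_bigr => y _.
  rewrite /Afac inE /qq /pp.
  case Exy: ((x, y) \in E); [have Hxy := Hno' _ _ Exy|];
   case: (leqP (layer_of L y) (layer_of L x)) => H1;
   case: (leqP (layer_of L x).+2 (layer_of L y)) => H2 //=; lia.
- rewrite [LHS]big_mkcond; apply: eq_bigr => y _.
  rewrite /gfac; case: ifP => // Hy.
  set V := nth _ _ _; set N := [set x in V | (x, y) \in E].
  have HNV : N \subset V by apply/fintype.subsetP => x; rewrite inE => /andP [].
  have e1 : forall f : bool -> R, \prod_(x in Vy L y) f (x \in col E y) = \prod_(x in V) f (x \in N).
    by move=> f; apply: eq_bigr => x Hx; rewrite !inE Hx.
  rewrite (e1 (fun b => if b then pp w else qq w)) (e1 (fun b => if b then 0 else qq w)).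
  rewrite prodA // prodB // /qq /pp /Vy -/V.
  case: ifP => [/eqP ->|_]; first by rewrite cards0 expr0 mul1r subn0 subrr mul0r.
  by rewrite subr0.
Qed.
Lemma F_invalid (R : realType) (w : R) n (L : seq {set 'I_n}) (HL : ordered_partition L)
  (E : {set 'I_n * 'I_n}) : ~~ validb L E -> Ff w L E = 0.
Proof.
move=> Hv; rewrite -law_F /cond_law /=; case: ifP => // Hno.
have HA : [forall x, forall y, ((x, y) \in E) ==> (layer_of L x < layer_of L y)%N].
  apply/forallP => x; apply/forallP => y; apply/implyP => Hxy; rewrite ltnNge; apply/negP => Hle.
  by move/negbT/negP: Hno; apply; apply/existsP; exists x; apply/existsP; exists y; rewrite Hxy.
move: Hv; rewrite /validb HA /= negb_forall => /existsP [y]; rewrite negb_imply => /andP [Hy Hnx].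
rewrite [X in _ * X](bigD1 y) //= ifT ?mul0r ?mulr0 //.
have Hk : ((layer_of L y).-1 < size L)%N by apply: leq_ltn_trans (leq_pred _) (lay_lt HL y).
apply/eqP/setP => x; rewrite !inE (mem_lay HL _ Hk).
by move: Hnx; rewrite negb_exists => /forallP /(_ x) /negbTE.
Qed.

Lemma qqE (R : realType) (w : R) : 0 < w -> qq w = (1 + w)^-1.
Proof.
move=> Hw; have H : 1 + w != 0 by rewrite lt0r_neq0 // addr_gt0.
by rewrite /qq /pp; field.
Qed.

Definition Mfac (R : realType) (w : R) n (L : seq {set 'I_n}) (y : 'I_n) : R :=
  (\prod_(x | (layer_of L x < layer_of L y)%N) (1 + w)^-1) *
  (if (0 < layer_of L y)%N then (1 - qq w ^+ #|Vy L y|)^-1 else 1).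

Lemma h_valid (R : realType) (w : R) n (L : seq {set 'I_n}) (HL : ordered_partition L)
  (Hw : 0 < w) (E : {set 'I_n * 'I_n}) y : validb L E ->
  hfac w L y (col E y) = (\prod_x (if (x, y) \in E then w else 1)) * Mfac w L y.
Proof.
case/andP => /forallP H1 /forallP H2.
have Hlt : forall x, (x, y) \in E -> (layer_of L x < layer_of L y)%N.
  by move=> x Hx; apply: (implyP (forallP (H1 x) y)).
rewrite /hfac /Mfac /gfac; case: ifP => Hy.
- have Hk : ((layer_of L y).-1 < size L)%N by apply: leq_ltn_trans (leq_pred _) (lay_lt HL y).
  have [x0 /andP [Hx0 Ex0]] := existsP (implyP (H2 y) Hy).
  rewrite [X in _ - X](bigD1 x0) /=; last by rewrite /Vy (mem_lay HL _ Hk).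
  rewrite inE Ex0 mul0r subr0.
  rewrite [\prod_(x in Vy L y) _]big_mkcond [X in _ = _ * (X * _)]big_mkcond /=.
  rewrite !mulrA -!big_split /=; congr (_ * _); apply: eq_bigr => x _.
  rewrite /Afac /Vy (mem_lay HL _ Hk) !inE qqE // /pp.
  case Exy: ((x, y) \in E); [have := Hlt _ Exy => Hxy|];
   case: (leqP (layer_of L y) (layer_of L x)) => H3;
   case: (leqP (layer_of L x).+2 (layer_of L y)) => H4;
   case: eqP => H5 //=; rewrite ?mul1r ?mulr1 //; lia.
- rewrite !mulr1 [\prod_(x | (layer_of L x < layer_of L y)%N) _]big_mkcond -big_split /=; apply: eq_bigr => x _.
  rewrite /Afac inE.
  case Exy: ((x, y) \in E); first by have := Hlt _ Exy; move/negbT: Hy; lia.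
  rewrite ifT ?ifF ?mul1r //; move/negbT: Hy; lia.
Qed.

Lemma Ff_valid (R : realType) (w : R) n (L : seq {set 'I_n}) (HL : ordered_partition L)
  (Hw : 0 < w) (E : {set 'I_n * 'I_n}) : validb L E ->
  Ff w L E = w ^+ #|E| * \prod_y Mfac w L y.
Proof.
move=> Hv; rewrite /Ff (eq_bigr _ (fun y _ => h_valid HL Hw y Hv)) big_split /=.
congr (_ * _).
rewrite exchange_big pair_big /= -prodr_const [RHS]big_mkcond /=.
by apply: eq_bigr => [[x y]] _.
Qed.
Lemma SP (R : realType) (I : finType) (f : I -> bool -> R) :
  \sum_(S : {set I}) \prod_i f i (i \in S) = \prod_i (f i true + f i false).
Proof.
rewrite (eq_bigr (fun i => \sum_(b : bool) f i b)); last by move=> i _; rewrite big_bool.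
rewrite bigA_distr_bigA /=.
rewrite (reindex (fun g : {ffun I -> bool} => [set i | g i])) /=; last first.
  apply: onW_bij; exists (fun S : {set I} => [ffun i => i \in S]).
  - by move=> g; apply/ffunP => i; rewrite ffunE inE.
  - by move=> S; apply/setP => i; rewrite inE ffunE.
by apply: eq_bigr => g _; apply: eq_bigr => i _; rewrite inE.
Qed.

Lemma sum_cols (R : realType) n (H : 'I_n -> {set 'I_n} -> R) :
  \sum_(E : {set 'I_n * 'I_n}) \prod_y H y (col E y) = \prod_y \sum_(S : {set 'I_n}) H y S.
Proof.
rewrite bigA_distr_bigA /=.
rewrite (reindex (fun f : {ffun 'I_n -> {set 'I_n}} => [set e | e.1 \in f e.2])) /=; last first.
  apply: onW_bij; exists (fun E : {set 'I_n * 'I_n} => [ffun y => col E y]).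
  - by move=> f; apply/ffunP => y; rewrite ffunE; apply/setP => x; rewrite !inE.
  - by move=> E; apply/setP => [[x y]]; rewrite !inE ffunE inE.
apply: eq_bigr => f _; apply: eq_bigr => y _; congr (H y _).
by apply/setP => x; rewrite !inE.
Qed.

Lemma hsum (R : realType) (w : R) n (L : seq {set 'I_n}) (HL : ordered_partition L)
  (Hw : 0 < w) (y : 'I_n) : \sum_(S : {set 'I_n}) hfac w L y S = 1.
Proof.
have Hpq : pp w + qq w = 1 by rewrite /qq addrC subrK.
rewrite /hfac /gfac; case Hy: (0 < layer_of L y)%N; last first.
  under eq_bigr do rewrite mulr1.
  rewrite (SP (fun x b => Afac w L x y b)); apply: big1 => x _.
  have H : (layer_of L y <= layer_of L x)%N by move/negbT: Hy; lia.
  by rewrite /Afac H add0r.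
have Hk : ((layer_of L y).-1 < size L)%N by apply: leq_ltn_trans (leq_pred _) (lay_lt HL y).
set V := Vy L y; set D := 1 - qq w ^+ #|V|.
have HD : D != 0.
  rewrite /D subr_eq0 eq_sym lt_eqF //; rewrite exprn_ilt1.
  - rewrite -lt0n card_gt0; case: (HL) => Hne _ _; exact: (all_nthP _ Hne).
  - by rewrite qqE // invr_ge0 addr_ge0 // ltW.
  - by rewrite qqE // invf_lt1 ?ltrDl // addr_gt0.
pose e1 x b := Afac w L x y b * (if x \in V then (if b then pp w else qq w) else 1).
pose e2 x b := Afac w L x y b * (if x \in V then (if b then 0 else qq w) else 1).
rewrite (eq_bigr (fun S : {set 'I_n} => (\prod_x e1 x (x \in S) - \prod_x e2 x (x \in S)) * D^-1)); last first.
  move=> S _; rewrite /e1 /e2 !big_split /= -!big_mkcond /=.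
  by rewrite mulrA mulrBr.
rewrite -mulr_suml sumrB (SP e1) (SP e2).
rewrite (eq_bigr (fun=> 1)); last first.
  move=> x _; rewrite /e1 /Afac /V /Vy (mem_lay HL _ Hk).
  case: (leqP (layer_of L y) (layer_of L x)) => H3;
   case: (leqP (layer_of L x).+2 (layer_of L y)) => H4;
   case: eqP => H5 //=; rewrite ?mul1r ?mulr1 ?mul0r ?add0r //; lia.
rewrite big1_eq [X in (1 - X) * _](eq_bigr (fun x => if x \in V then qq w else 1)).
  by rewrite -big_mkcond prodr_const -/D mulfV.
move=> x _; rewrite /e2 /Afac /V /Vy (mem_lay HL _ Hk).
case: (leqP (layer_of L y) (layer_of L x)) => H3;
 case: (leqP (layer_of L x).+2 (layer_of L y)) => H4;
 case: eqP => H5 //=; rewrite ?mul1r ?mulr1 ?mul0r ?add0r //; lia.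
Qed.

Lemma sum_F (R : realType) (w : R) n (L : seq {set 'I_n}) (HL : ordered_partition L)
  (Hw : 0 < w) : \sum_(E : {set 'I_n * 'I_n}) Ff w L E = 1.
Proof.
rewrite /Ff sum_cols; apply: big1 => y _; exact: hsum.
Qed.
Lemma bweight_gt0 (R : realType) (z w : R) m (E : {set 'I_m * 'I_m}) :
  0 < z -> 0 < w -> 0 < bweight z w E.
Proof.
move=> Hz Hw; rewrite /bweight; apply: divr_gt0.
  by apply: mulr_gt0; apply: exprn_gt0.
apply: mulr_gt0; first by apply: exprn_gt0; apply: addr_gt0.
by rewrite ltr0n fact_gt0.
Qed.

Lemma Dz_gt0 (R : realType) (z w : R) :
  0 < z -> 0 < w -> cvgn (series (dag_term z w)) -> 0 < DAGzw z w.
Proof.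
move=> Hz Hw Hc.
have Hd : forall m, 0 <= dag_term z w m.
  by move=> m; apply: sumr_ge0 => E _; apply: ltW; apply: bweight_gt0.
have Hnd : nondecreasing_seq (series (dag_term z w)).
  by apply/nondecreasing_seqP => m; rewrite seriesSr lerDl.
apply: lt_le_trans (nondecreasing_cvgn_le Hnd Hc 1).
have -> : series (dag_term z w) 1 = dag_term z w 0 by rewrite /series /= big_nat1.
rewrite /dag_term (bigD1 finset.set0) /=; last first.
  by apply/forallP => x; apply/forallP => y; rewrite inE.
apply: (lt_le_trans (bweight_gt0 finset.set0 Hz Hw)); apply: ler_wpDr => //.
by apply: sumr_ge0 => E _; apply: ltW; apply: bweight_gt0.
Qed.

Unset Implicit Arguments.

Theorem lemma4 (R : realType) (z w : R) :
  0 < z -> 0 < w -> cvgn (series (dag_term z w)) ->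
  forall (n : nat) (L : seq {set 'I_n}), ordered_partition L ->
  forall E : {set 'I_n * 'I_n}, cond_prob z w L E = cond_law w L E.
Proof.
move=> Hz Hw Hc n L HL E.
have HDz : DAGzw z w != 0 by apply: lt0r_neq0; apply: Dz_gt0.
pose c0 : R := z ^+ n / ((1 + w) ^+ 'C(n, 2) * n`!%:R).
have Hbw : forall E' : {set 'I_n * 'I_n}, bweight z w E' = c0 * w ^+ #|E'|.
  by move=> E'; rewrite /bweight /c0 mulrAC.
have Hc0 : c0 != 0.
  have := bweight_gt0 (finset.set0 : {set 'I_n * 'I_n}) Hz Hw.
  rewrite Hbw cards0 expr0 mulr1; exact: lt0r_neq0.
pose M := \prod_y Mfac w L y.
pose S := \sum_(E' | validb L E') w ^+ #|E'|.
have HMS : S * M = 1.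
  rewrite -(sum_F HL Hw) (bigID (validb L)) /= [X in _ + X]big1 ?addr0; last first.
    by move=> E' Hv; apply: F_invalid.
  rewrite /S mulr_suml; apply: eq_bigr => E' Hv; by rewrite (Ff_valid HL Hw Hv).
have HS : S != 0.
  by apply/eqP => H0; move: HMS; rewrite H0 mul0r => /eqP; rewrite eq_sym oner_eq0.
have HM : M = S^-1 by apply: (mulfI HS); rewrite HMS mulfV.
have HPL : prob_layering z w L = c0 * S / DAGzw z w.
  rewrite /prob_layering (eq_bigl (validb L)); last by move=> E'; rewrite (rl_valid HL).
  rewrite /S mulr_sumr mulr_suml; apply: eq_bigr => E' Hv.
  by rewrite /bprob (valid_dag Hv) Hbw.
rewrite /cond_prob (rl_valid HL) HPL law_F.
case: (boolP (validb L E)) => Hv.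
- rewrite /bprob (valid_dag Hv) Hbw (Ff_valid HL Hw Hv) -/M HM.
  by field; rewrite HS HDz Hc0.
- by rewrite (F_invalid _ HL Hv) mul0r.
Qed.
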